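(* Under Assumption 1 and the normalization $p_0=1$, the log-utility of the representative household at the equilibrium $(\bar x,\bar p,\bar y)$ of $\mathcal{E}(\lambda,a)$ is $$V(a,\lambda)=\log u(\bar x_0)=\log(\bar v_0)+\sum_{i\in M}a_{0,i}\log a_{0,i}+a_0^T(I-A)^{-1}u+a_0^T(I-A)^{-1}D\log(\bar v),$$ where $\bar v_0=1+\sum_{i\in M}\varepsilon_i\bar v_i$ is household income, $u_i=\log\lambda_i(a_i)+\sum_{j\in N}a_{i,j}\log a_{i,j}$ and $D=\mathrm{diag}(\sum_{j\in N}a_{i,j}-1)_{i\in M}$.
   Context: Same economy as follows. Household $0$, firms $M=\{1,\dots,m\}$, $N=M\cup\{0\}$ (index 0 also labor, sector 0, $M_0=\{0\}$). Household: one unit of labor, receives all profits, utility $u(x_0)=\prod_{j\in M}x_{0,j}^{a_{0,j}}$, $a_0\ge0$, $\sum a_{0,j}=1$. Firm $i$: requirements $b_i\ge0$, $\sum_\ell b_{i,\ell}\le1$; input shares $a_i\in\mathbb{R}^N_+$ with $\sum_{j\in M_\ell}a_{i,j}=b_{i,\ell}$; production $f_{a,i}(x_i)=\lambda_i(a_i)\prod_{j\in N}x_{i,j}^{a_{i,j}}$; $\varepsilon_i=1-\sum_{j\in N}a_{i,j}$. $A=(a_{i,j})_{i,j\in M}$. General equilibrium: firms maximize profit, household maximizes utility under its budget (labor income plus all profits), all markets clear, labor supply $1$. $\bar v_i=\bar p_i\bar y_i$ denotes equilibrium revenue of firm $i$; $0\log0=0$. Assumption 1: $a_0\in\mathbb{R}^M_{++}$;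 $b_{i,0}>0$ for all $i$; some firm has a positive requirement in some non-labor sector. *)

(* Defs.v *)
From HB Require Import structures.
From mathcomp Require Import all_boot all_order all_algebra.
From mathcomp Require Import all_classical all_reals all_analysis.
Set Implicit Arguments. Unset Strict Implicit. Unset Printing Implicit Defensive.
Import Order.TTheory GRing.Theory Num.Theory.
Local Open Scope ring_scope.

(* Indexing conventions.
   - Firms M = {1,...,m} are represented by 'I_m.
   - N = M ∪ {0} is represented by 'I_m.+1: index ord0 is labor (the
     household), and firm i : 'I_m corresponds to  firm i := lift ord0 i.
   - Non-labor sectors 1..L are represented by 'I_L; sector indices
     {0,...,L} by 'I_L.+1, where sector 0 (ord0) is labor, M_0 = {0}, and
     non-labor sector l : 'I_L is lift ord0 l.  sec j is the sector of firm j. *)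

Definition firm {m : nat} (i : 'I_m) : 'I_m.+1 := lift ord0 i.
Definition sect {L : nat} (l : 'I_L) : 'I_L.+1 := lift ord0 l.

Section Economy.
Variable R : realType.
Variables (m L : nat).

Definition xlogx (t : R) : R := if t == 0 then 0 else t * ln t.

Definition utility (a0 : 'I_m -> R) (x0 : 'I_m -> R) : R :=
  \prod_(j < m) (x0 j) `^ (a0 j).

Definition prod_fun (lam : R) (ai : 'I_m.+1 -> R) (xi : 'I_m.+1 -> R) : R :=
  lam * \prod_(j < m.+1) (xi j) `^ (ai j).

Definition eps (a : 'I_m -> 'I_m.+1 -> R) (i : 'I_m) : R :=
  1 - \sum_(j < m.+1) a i j.

(* Standing structure of the economy (technology shares compatible with
   requirements) together with Assumption 1. *)
Definition economy_ok (sec : 'I_m -> 'I_L) (b : 'I_m -> 'I_L.+1 -> R)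
  (a0 : 'I_m -> R) (a : 'I_m -> 'I_m.+1 -> R) (lam : 'I_m -> R) : Prop :=
  ((forall j, 0 <= a0 j) /\ \sum_(j < m) a0 j = 1) /\
  ((forall i l, 0 <= b i l) /\ (forall i, \sum_(l < L.+1) b i l <= 1)) /\
  (forall i j, 0 <= a i j) /\
  (forall i, a i ord0 = b i ord0) /\
  (forall i (l : 'I_L), \sum_(j < m | sec j == l) a i (firm j) = b i (sect l)) /\
  (forall i, 0 < lam i) /\
  (* Assumption 1 *)
  ((forall j, 0 < a0 j) /\ (forall i, 0 < b i ord0) /\
   exists i (l : 'I_L), 0 < b i (sect l)).

(* General equilibrium (x, p, y) of E(lambda, a).
   p : prices over N (p ord0 is the wage), y : outputs of firms,
   x : inputs of firms (x i j, j in N), x0 : household consumption over M. *)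
Definition profit (lam : 'I_m -> R) (a : 'I_m -> 'I_m.+1 -> R)
  (p : 'I_m.+1 -> R) (i : 'I_m) (xi : 'I_m.+1 -> R) : R :=
  p (firm i) * prod_fun (lam i) (a i) xi - \sum_(j < m.+1) p j * xi j.

Definition equilibrium (a0 : 'I_m -> R) (a : 'I_m -> 'I_m.+1 -> R)
  (lam : 'I_m -> R) (x0 : 'I_m -> R) (x : 'I_m -> 'I_m.+1 -> R)
  (p : 'I_m.+1 -> R) (y : 'I_m -> R) : Prop :=
  let income := p ord0 * 1 + \sum_(i < m) profit lam a p i (x i) in
  (forall j, 0 <= p j) /\
  ((forall i j, 0 <= x i j) /\ (forall j, 0 <= x0 j)) /\
  [/\
      (forall i, y i = prod_fun (lam i) (a i) (x i)),
      (forall i (xi : 'I_m.+1 -> R), (forall j, 0 <= xi j) ->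
          profit lam a p i xi <= profit lam a p i (x i)),
      \sum_(j < m) p (firm j) * x0 j <= income &
      [/\ (forall x0' : 'I_m -> R, (forall j, 0 <= x0' j) ->
             \sum_(j < m) p (firm j) * x0' j <= income ->
             utility a0 x0' <= utility a0 x0),
          (forall j, x0 j + \sum_(i < m) x i (firm j) = y j) &
          \sum_(i < m) x i ord0 = 1]].

Definition Amx (a : 'I_m -> 'I_m.+1 -> R) : 'M[R]_m :=
  \matrix_(i, j) a i (firm j).

Definition uvec (a : 'I_m -> 'I_m.+1 -> R) (lam : 'I_m -> R) : 'cV[R]_m :=
  \col_i (ln (lam i) + \sum_(j < m.+1) xlogx (a i j)).

Definition Dmx (a : 'I_m -> 'I_m.+1 -> R) : 'M[R]_m :=
  diag_mx (\row_i (\sum_(j < m.+1) a i j - 1)).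

End Economy.

(* Main.v *)
Require Import Defs.
From HB Require Import structures.
From mathcomp Require Import all_boot all_order all_algebra.
From mathcomp Require Import all_classical all_reals all_analysis.
From mathcomp Require Import ring lra.
Import Order.TTheory GRing.Theory Num.Theory.
Local Open Scope ring_scope.

Section Helpers1.
Variable R : realType.
Lemma ln_prod (I : finType) (f : I -> R) : (forall i, 0 < f i) ->
  ln (\prod_i f i) = \sum_i ln (f i).
Proof.
move=> fp.
pose K (s q : R) := 0 < q /\ ln q = s.
suff [] : K (\sum_i ln (f i)) (\prod_i f i) by [].
apply: (big_rec2 K); first by split; [exact: ltr01| exact: ln1].
move=> i s q _ [q0 <-]; split; first by rewrite mulr_gt0.
by rewrite lnM ?posrE.
Qed.

Lemma ln_le_sub1 (t : R) : 0 < t -> ln t <= t - 1.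
Proof.
move=> t0; have H := @le_ln1Dx R (t - 1).
have E : 1 + (t - 1) = t by rewrite addrC subrK.
by rewrite -{1}E; apply: H; lra.
Qed.

Lemma jensen_ln n (w z : 'I_n -> R) : (forall j, 0 < w j) -> \sum_j w j = 1 ->
  (forall j, 0 < z j) -> \sum_j w j * ln (z j) <= ln (\sum_j w j * z j).
Proof.
move=> w0 w1 z0.
set M := \sum_j w j * z j.
have M0 : 0 < M.
  rewrite lt_def sumr_ge0 ?andbT; last by move=> j _; rewrite mulr_ge0 // ltW.
  apply/negP => /eqP/psumr_eq0P H.
  have {}H : forall j, w j * z j = 0.
    by move=> j; apply: H => // i _; rewrite mulr_ge0 // ltW.
  have : \sum_j w j = 0.
    apply: big1 => j _; have /eqP := H j.
    by rewrite mulf_eq0 (gt_eqF (z0 j)) orbF => /eqP.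
  by rewrite w1; apply/eqP; rewrite oner_eq0.
rewrite -subr_le0.
have -> : ln M = \sum_j w j * ln M by rewrite -mulr_suml w1 mul1r.
rewrite -sumrB.
apply: (@le_trans _ _ (\sum_j w j * (z j / M - 1))).
  apply: ler_sum => j _; rewrite -mulrBr ler_pM2l //.
  rewrite -ln_div ?posrE //; exact: ln_le_sub1 (divr_gt0 (z0 j) M0).
rewrite (eq_bigr (fun j => w j * z j / M - w j)); last by move=> j _; rewrite mulrBr mulr1 mulrA.
rewrite sumrB -mulr_suml w1 divff ?subrr // gt_eqF //.
Qed.

Lemma foc (K c a x : R) : 0 < x -> 0 <= a ->
  (forall t : R, 0 < t -> K * t `^ a - c * t <= K * x `^ a - c * x) ->
  K * a * x `^ a = c * x.
Proof.
move=> x0 a0 H.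
pose f := fun t : R => K * t `^ a - c * t.
have D : forall t : R, 0 < t -> is_derive t 1 f (K * (a * t `^ (a - 1)) - c).
  move=> t t0.
  have := is_deriveB (is_deriveZ K (is_derive1_powR a t0)) (is_deriveZ c (@is_derive_id _ _ t 1)).
  have -> : f = (K \*: (powR (R:=R))^~ a - c \*: id) by apply/funext=> s.
  by move=> HH; apply: is_derive_eq HH _; rewrite /GRing.scale /= mulr1.
have x2 : 0 <= 2 * x by lra.
have xin : x \in `]0, 2 * x[%R by rewrite in_itv /=; apply/andP; split; lra.
have Dx0 : is_derive x 1 f 0.
  apply: (derive1_at_max x2 _ xin) => t; rewrite in_itv /= => /andP[t0 _].
    by case: (D t t0).
  exact: H.
have E1 := @derive_val _ _ _ _ _ _ _ Dx0.
have E2 := @derive_val _ _ _ _ _ _ _ (D x x0).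
have {E1 E2} E : c = K * (a * x `^ (a - 1)).
  by apply/eqP; rewrite eq_sym -subr_eq0 -E2 E1.
rewrite E; have [->|ap] := eqVneq a 0; first by rewrite !(mulr0, mul0r).
rewrite -!mulrA; congr (_ * (_ * _)).
by rewrite mulrC mulr_powRB1 // ?ltW // lt_def ap.
Qed.
Lemma fixrow_eq0 n (A : 'M[R]_n) (w : 'rV[R]_n) :
  (forall i j, 0 <= A i j) -> (forall i, \sum_j A i j < 1) ->
  (forall i, w 0 i = \sum_j w 0 j * A i j) -> w = 0.
Proof.
move=> A0 A1 Hw.
pose M := \big[Order.max/0]_j `|w 0 j|.
pose rho := \big[Order.max/0]_i \sum_j A i j.
have M0 : 0 <= M.
  elim/big_ind: M => [//|x y hx _|j _]; [by rewrite le_max hx|exact: normr_ge0].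
have rho0 : 0 <= rho.
  elim/big_ind: rho => [//|x y hx _|j _]; first by rewrite le_max hx.
  by apply: sumr_ge0 => k _; exact: A0.
have rho1 : rho < 1 by apply: bigmax_lt => //; exact: ltr01.
have bnd : forall i, `|w 0 i| <= M * rho.
  move=> i; rewrite Hw.
  apply: (le_trans (ler_norm_sum _ _ _)).
  apply: (@le_trans _ _ (\sum_j M * A i j)).
    apply: ler_sum => j _; rewrite normrM (ger0_norm (A0 i j)) ler_wpM2r //.
    exact: le_bigmax.
  rewrite -mulr_sumr ler_wpM2l //; exact: (le_bigmax _ (fun i => \sum_j A i j)).
have MM : M <= M * rho by apply: bigmax_le => //; rewrite mulr_ge0.
have M00 : M = 0 by nra.
apply/rowP => i; rewrite mxE; apply/eqP; rewrite -normr_le0.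
by rewrite -M00; exact: le_bigmax.
Qed.

Lemma unit_IA n (A : 'M[R]_n) :
  (forall i j, 0 <= A i j) -> (forall i, \sum_j A i j < 1) ->
  (1%:M - A) \in unitmx.
Proof.
move=> A0 A1.
rewrite -unitmx_tr -row_free_unit -kermx_eq0; apply/eqP/matrixP => r c.
rewrite [RHS]mxE.
have K := mulmx_ker ((1%:M - A)^T).
set w := row r (kermx (1%:M - A)^T).
have W : w *m (1%:M - A)^T = 0 by rewrite -row_mul K row0.
suff W0 : w = 0.
  by have := congr1 (fun M : 'rV_n => M 0 c) W0; rewrite /w !mxE.
move: W; rewrite linearB /= trmx1 mulmxBr mulmx1 => /eqP; rewrite subr_eq0 => /eqP W.
apply: fixrow_eq0 A0 A1 _ => i.
by rewrite {1}W mxE; apply: eq_bigr => j _; rewrite [A^T j i]mxE.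
Qed.
Lemma firm_foc n (lam pi : R) (ai xi p : 'I_n -> R) :
  (forall j, 0 <= ai j) -> (forall j, 0 <= xi j) ->
  (forall xi' : 'I_n -> R, (forall j, 0 <= xi' j) ->
     pi * (lam * \prod_j xi' j `^ ai j) - \sum_j p j * xi' j <=
     pi * (lam * \prod_j xi j `^ ai j) - \sum_j p j * xi j) ->
  forall j, p j * xi j = ai j * (pi * (lam * \prod_k xi k `^ ai k)).
Proof.
move=> a0 x0 opt j.
have [xj0|xjp] := eqVneq (xi j) 0.
  rewrite xj0 mulr0; have [->|aj] := eqVneq (ai j) 0; first by rewrite mul0r.
  by rewrite (bigD1 j) //= xj0 powR0 // !(mul0r, mulr0).
have xj : 0 < xi j by rewrite lt_def xjp x0.
pose P' := \prod_(k | k != j) xi k `^ ai k.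
pose S' := \sum_(k | k != j) p k * xi k.
pose xt := fun t : R => fun k => if k == j then t else xi k.
have Et : forall t, pi * (lam * \prod_k xt t k `^ ai k) - \sum_k p k * xt t k
           = (pi * lam * P') * t `^ ai j - p j * t - S'.
  move=> t.
  have EP : \prod_(k | k != j) xt t k `^ ai k = P'.
    by apply: eq_bigr => k /negbTE; rewrite /xt => ->.
  have ES : \sum_(k | k != j) p k * xt t k = S'.
    by apply: eq_bigr => k /negbTE; rewrite /xt => ->.
  rewrite (bigD1 j) //= (bigD1 j (P := xpredT)) //= EP ES /xt eqxx.
  ring.
have E0 : pi * (lam * \prod_k xi k `^ ai k) - \sum_k p k * xi k
           = (pi * lam * P') * xi j `^ ai j - p j * xi j - S'.
  rewrite -Et; congr (_ * (_ * _) - _).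
    by apply: eq_bigr => k _; rewrite /xt; case: eqP => // ->.
  by apply: eq_bigr => k _; rewrite /xt; case: eqP => // ->.
suff F : pi * lam * P' * ai j * xi j `^ ai j = p j * xi j.
  by rewrite (bigD1 j) //= -F /P'; ring.
apply: foc xj (a0 j) _ => t t0.
have := opt (xt t); rewrite Et E0.
have : forall k, 0 <= xt t k by move=> k; rewrite /xt; case: eqP => _ //; exact: ltW.
move=> H /(_ H) H2; lra.
Qed.
End Helpers1.

Section Helpers2.
Set Implicit Arguments. Unset Strict Implicit.
Variable R : realType.
Lemma ln_utility n (w x : 'I_n -> R) : (forall j, 0 < x j) ->
  ln (utility w x) = \sum_j w j * ln (x j).
Proof.
move=> xp; rewrite /utility ln_prod => [|j]; last exact: powR_gt0.
by apply: eq_bigr => j _; rewrite ln_powR.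
Qed.

Lemma utility_gt0 n (w x : 'I_n -> R) : (forall j, 0 < x j) -> 0 < utility w x.
Proof. by move=> xp; apply: prodr_gt0 => j _; exact: powR_gt0. Qed.

Lemma utility_ge0 n (w x : 'I_n -> R) : 0 <= utility w x.
Proof. by apply: prodr_ge0 => j _; exact: powR_ge0. Qed.

Lemma household n (w q x : 'I_n -> R) (I : R) :
  (forall j, 0 < w j) -> \sum_j w j = 1 -> (forall j, 0 <= q j) -> 0 < I ->
  (forall j, 0 <= x j) ->
  \sum_j q j * x j <= I ->
  (forall x' : 'I_n -> R, (forall j, 0 <= x' j) -> \sum_j q j * x' j <= I ->
     utility w x' <= utility w x) ->
  (forall j, 0 < q j) /\ (forall j, 0 < x j) /\
  ln (utility w x) = ln I + \sum_j xlogx (w j) - \sum_j w j * ln (q j).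
Proof.
move=> w0 w1 q0 I0 x0 bud opt.
have qpos : forall k, 0 < q k.
  move=> k; rewrite lt_def q0 andbT; apply/negP => /eqP qk.
  pose U := utility w x + 1.
  have U0 : 0 < U by rewrite /U; have := utility_ge0 w x; lra.
  pose S := \sum_j q j.
  have S0 : 0 <= S by apply: sumr_ge0 => j _.
  pose d := I / (1 + S).
  have d0 : 0 < d by rewrite divr_gt0 //; lra.
  pose c := `|ln U - ln d| / w k + 1.
  have c0 : 0 < c by rewrite /c; have := divr_ge0 (normr_ge0 (ln U - ln d)) (ltW (w0 k)); lra.
  pose x' := fun j => if q j == 0 then d * expR c else d.
  have x'p : forall j, 0 < x' j.
    by move=> j; rewrite /x'; case: eqP => _ //; rewrite mulr_gt0 // expR_gt0.
  have feas : \sum_j q j * x' j <= I.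
    rewrite (eq_bigr (fun j => q j * d)); last first.
      by move=> j _; rewrite /x'; case: eqP => [->|]; rewrite ?mul0r.
    rewrite -mulr_suml -/S /d mulrA ler_pdivrMr; last lra.
    nra.
  have := opt x' (fun j => ltW (x'p j)) feas.
  have ec : 1 <= expR c by have := expR_ge1Dx c; lra.
  have lx : forall j, w j * ln d <= w j * ln (x' j).
    move=> j; rewrite ler_pM2l // ler_ln ?posrE //.
    rewrite /x'; case: eqP => _ //; rewrite ler_peMr //; lra.
  have lk : w k * (ln d + c) = w k * ln (x' k).
    by rewrite /x' qk eqxx lnM ?posrE ?expR_gt0 // expRK.
  have big : ln d + w k * c <= ln (utility w x').
    rewrite ln_utility // (bigD1 k) //= -lk.
    have Sd : \sum_(j | j != k) w j * ln d <= \sum_(j | j != k) w j * ln (x' j).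
      by apply: ler_sum => j _; exact: lx.
    have Wd : w k * ln d + \sum_(j | j != k) w j * ln d = ln d.
      have : \sum_j w j * ln d = ln d by rewrite -mulr_suml w1 mul1r.
      by rewrite (bigD1 k).
    have E := mulrDr (w k) (ln d) c; lra.
  have : ln U < ln d + w k * c.
    rewrite /c mulrDr mulrC -mulrA mulVf ?gt_eqF // mulr1.
    have := ler_norm (ln U - ln d); have := w0 k; lra.
  move=> h1 h2.
  have : ln U < ln (utility w x') by lra.
  rewrite ltr_ln ?posrE ?utility_gt0 //.
  rewrite /U; lra.
pose xs := fun j => w j * I / q j.
have xsp : forall j, 0 < xs j by move=> j; rewrite /xs divr_gt0 // mulr_gt0.
have xsf : \sum_j q j * xs j <= I.
  rewrite (eq_bigr (fun j => w j * I)); last first.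
    by move=> j _; rewrite /xs mulrC divfK // gt_eqF.
  by rewrite -mulr_suml w1 mul1r.
have uxs := opt xs (fun j => ltW (xsp j)) xsf.
have lnxs : ln (utility w xs) = ln I + \sum_j xlogx (w j) - \sum_j w j * ln (q j).
  rewrite ln_utility //.
  have -> : ln I = \sum_j w j * ln I by rewrite -mulr_suml w1 mul1r.
  rewrite -big_split -sumrB /=; apply: eq_bigr => j _.
  rewrite /xs /xlogx gt_eqF // ln_div ?posrE ?mulr_gt0 // lnM ?posrE //.
  ring.
have xp : forall j, 0 < x j.
  move=> j; rewrite lt_def x0 andbT; apply/negP => /eqP xj.
  have : utility w x = 0.
    by rewrite /utility (bigD1 j) //= xj powR0 ?mul0r // gt_eqF.
  have := utility_gt0 w xsp; lra.
split => //; split => //.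
apply/le_anti/andP; split; last first.
  by rewrite -lnxs ler_ln ?posrE ?utility_gt0.
pose z := fun j => q j * x j / w j.
have zp : forall j, 0 < z j by move=> j; rewrite /z divr_gt0 // mulr_gt0.
have J := @jensen_ln R n w z w0 w1 zp.
have Ez : \sum_j w j * z j = \sum_j q j * x j.
  by apply: eq_bigr => j _; rewrite /z mulrC divfK // gt_eqF.
rewrite Ez in J.
have sp : 0 < \sum_j q j * x j.
  rewrite lt_def sumr_ge0 ?andbT; last by move=> j _; rewrite mulr_ge0 // ltW.
  apply/negP => /eqP/psumr_eq0P H.
  have : \sum_j w j = 0.
    apply: big1 => j _; exfalso.
    have H' := H (fun i _ => ltW (mulr_gt0 (qpos i) (xp i))).
    have := H' j isT; have := mulr_gt0 (qpos j) (xp j); lra.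
  rewrite w1 => /eqP; rewrite oner_eq0.
  done.
have lb : ln (\sum_j q j * x j) <= ln I by rewrite ler_ln ?posrE.
have E1 : \sum_j w j * ln (z j) =
  \sum_j w j * ln (x j) + \sum_j w j * ln (q j) - \sum_j xlogx (w j).
  rewrite -big_split -sumrB /=; apply: eq_bigr => j _.
  rewrite /z /xlogx gt_eqF // ln_div ?posrE ?mulr_gt0 // lnM ?posrE //.
  ring.
rewrite ln_utility //; lra.
Qed.
End Helpers2.

Theorem mainTheorem3 (R : realType) (m L : nat) (sec : 'I_m -> 'I_L)
  (b : 'I_m -> 'I_L.+1 -> R) (a0 : 'I_m -> R) (a : 'I_m -> 'I_m.+1 -> R)
  (lam : 'I_m -> R) (x0 : 'I_m -> R) (x : 'I_m -> 'I_m.+1 -> R)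
  (p : 'I_m.+1 -> R) (y : 'I_m -> R) :
  economy_ok sec b a0 a lam ->
  equilibrium a0 a lam x0 x p y ->
  p ord0 = 1 ->
  let v := fun i : 'I_m => p (firm i) * y i in
  let v0 := 1 + \sum_(i < m) eps a i * v i in
  let a0r : 'rV[R]_m := \row_j a0 j in
  let Linv := invmx (1%:M - Amx a) in
  let logv : 'cV[R]_m := \col_i ln (v i) in
  (* v0 is household income: wage (labor supply 1) plus all profits *)
  v0 = p ord0 * 1 + \sum_(i < m) profit lam a p i (x i) /\
  ln (utility a0 x0)
  = ln v0 + \sum_(i < m) xlogx (a0 i)
    + (a0r *m Linv *m uvec a lam) ord0 ord0
    + (a0r *m Linv *m (Dmx a *m logv)) ord0 ord0.
Proof.
move=> eco equi p01 v v0 a0r Linv logv.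
case: eco => [[a0nn a0s] [[bnn bsum] [ann [ab0 [absec [lampos [a0pos [bpos0 _]]]]]]]].
move: equi; rewrite /equilibrium /= => -[pnn [[xnn x0nn] [yeq popt bud [uopt mclr lab]]]].
have focij : forall i j, p j * x i j = a i j * v i.
  move=> i j; rewrite /v yeq.
  apply: (@firm_foc _ _ (lam i) (p (firm i)) (a i) (x i) p) => //.
  by move=> xi' h; exact: popt i xi' h.
have profit_eq : forall i, profit lam a p i (x i) = eps a i * v i.
  move=> i; rewrite /profit -yeq (eq_bigr _ (fun j _ => focij i j)) -mulr_suml /eps /v.
  ring.
have inc : v0 = p ord0 * 1 + \sum_(i < m) profit lam a p i (x i).
  by rewrite p01 mulr1 /v0 (eq_bigr _ (fun i _ => profit_eq i)).
split => //.
rewrite -inc in bud uopt.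
have prof0 : forall i, 0 <= profit lam a p i (x i).
  move=> i; apply: le_trans (popt i (fun _ => 0) (fun _ => lexx 0)).
  rewrite /profit big1 ?subr0; last by move=> j _; rewrite mulr0.
  apply: mulr_ge0 => //; rewrite /prod_fun; apply: mulr_ge0; first exact: ltW.
  by apply: prodr_ge0 => j _; exact: powR_ge0.
have I0 : 0 < v0.
  rewrite inc p01 mulr1.
  have : 0 <= \sum_(i < m) profit lam a p i (x i) by apply: sumr_ge0 => i _; exact: prof0.
  lra.
have [qpos [x0pos lnU]] := @household _ _ a0 (fun j => p (firm j)) x0 v0 a0pos a0s
  (fun j => pnn (firm j)) I0 x0nn bud uopt.
have pall : forall j, 0 < p j.
  by move=> j; case: (unliftP ord0 j) => [j'|] ->; [exact: qpos | rewrite p01].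
have ypos : forall i, 0 < y i.
  move=> i; rewrite -mclr; have := x0pos i.
  have : 0 <= \sum_(k < m) x k (firm i) by apply: sumr_ge0 => k _; exact: xnn.
  lra.
have vpos : forall i, 0 < v i by move=> i; rewrite /v mulr_gt0.
have lpeq : forall i, ln (p (firm i)) - \sum_j a i (firm j) * ln (p (firm j)) =
    - (ln (lam i) + \sum_(j < m.+1) xlogx (a i j)) - (\sum_(j < m.+1) a i j - 1) * ln (v i).
  move=> i.
  have fp : forall j, 0 < x i j `^ a i j.
    move=> j; rewrite lt_def powR_ge0 andbT; apply/negP => /eqP f0.
    have : y i = 0 by rewrite yeq /prod_fun (bigD1 j) //= f0 mul0r mulr0.
    by have := ypos i; lra.
  have Ly : ln (y i) = ln (lam i) + \sum_(j < m.+1) a i j * ln (x i j).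
    rewrite yeq /prod_fun lnM ?posrE ?prodr_gt0 // ln_prod //.
    by congr (_ + _); apply: eq_bigr => j _; rewrite ln_powR.
  have Lx : forall j, a i j * ln (x i j) = xlogx (a i j) + a i j * ln (v i) - a i j * ln (p j).
    move=> j; have [->|aj] := eqVneq (a i j) 0; first by rewrite /xlogx eqxx !mul0r; ring.
    have aip : 0 < a i j by rewrite lt_def aj ann.
    have -> : x i j = a i j * v i / p j.
      by rewrite -focij mulrAC divff ?mul1r // gt_eqF.
    rewrite /xlogx (negbTE aj) ln_div ?posrE ?mulr_gt0 // lnM ?posrE //.
    ring.
  have Lv : ln (v i) = ln (p (firm i)) + ln (y i) by rewrite /v lnM ?posrE.
  rewrite (eq_bigr _ (fun j _ => Lx j)) sumrB big_split /= -mulr_suml in Ly.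
  rewrite [\sum_(j < m.+1) a i j * ln (p j)]big_ord_recl p01 ln1 mulr0 add0r in Ly.
  have EF : \sum_(j < m) a i (lift ord0 j) * ln (p (lift ord0 j)) =
            \sum_j a i (firm j) * ln (p (firm j)) by [].
  rewrite EF in Ly.
  rewrite mulrBl mul1r; lra.
have AU : (1%:M - Amx a) \in unitmx.
  apply: unit_IA => [i j|i]; rewrite ?mxE //.
  under eq_bigr do rewrite mxE.
  have E1 : \sum_(l < L.+1) b i l = b i ord0 + \sum_(l < L) b i (sect l) by rewrite big_ord_recl.
  have E2 : \sum_(j < m) a i (firm j) = \sum_(l < L) b i (sect l).
    rewrite (partition_big sec xpredT) //=; apply: eq_bigr => l _; exact: absec.
  have := bsum i; have := bpos0 i; lra.
pose lp : 'cV[R]_m := \col_i ln (p (firm i)).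
have KEQ : uvec a lam + Dmx a *m logv = - ((1%:M - Amx a) *m lp).
  apply/colP => i; rewrite mulmxBl mul1mx /Dmx mul_diag_mx !mxE.
  have -> : \sum_j Amx a i j * lp j 0 = \sum_j a i (firm j) * ln (p (firm j)).
    by apply: eq_bigr => j _; rewrite !mxE.
  have := lpeq i; lra.
have KEY : a0r *m Linv *m uvec a lam + a0r *m Linv *m (Dmx a *m logv) = - (a0r *m lp).
  by rewrite -mulmxDr KEQ mulmxN -mulmxA mulKmx.
have E : (a0r *m Linv *m uvec a lam) ord0 ord0 + (a0r *m Linv *m (Dmx a *m logv)) ord0 ord0
   = - (a0r *m lp) ord0 ord0.
  have eD : forall A B : 'M[R]_1, (A + B) ord0 ord0 = A ord0 ord0 + B ord0 ord0 by move=> A B; rewrite mxE.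
  have eN : forall A : 'M[R]_1, (- A) ord0 ord0 = - A ord0 ord0 by move=> A; rewrite mxE.
  by rewrite -eD KEY eN.
have E2 : (a0r *m lp) ord0 ord0 = \sum_j a0 j * ln (p (firm j)).
  by rewrite mxE; apply: eq_bigr => j _; rewrite !mxE.
rewrite lnU; lra.
Qed.
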